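(* Let $p\ge 1$, $n_0,n_1\ge 1$, let $\bm{X}_0$ ($n_0\times p$) and $\bm{X}_1$ ($n_1\times p$) be fixed design matrices of full column rank, let $\sigma_0,\sigma_1>0$ be known, and let $0<a_0\le 1$. Suppose the historical responses satisfy $\bm{Y}_0\sim N_{n_0}(\bm{X}_0\bm{\beta}_0,\sigma_0^2\bm{I}_{n_0})$ and the current responses satisfy $\bm{Y}_1\sim N_{n_1}(\bm{X}_1\bm{\beta}_1,\sigma_1^2\bm{I}_{n_1})$, independently, where the parameters satisfy the scale-transformation relation $\bm{\beta}_0=(\sigma_0/\sigma_1)\bm{\beta}_1$. Define the straPP posterior mean and power-prior posterior mean $$\widehat{\bm{\beta}}_s=\bm{\Sigma}_s\Big\{\tfrac{1}{\sigma_1^2}\bm{X}_1^T\bm{Y}_1+\tfrac{a_0}{\sigma_0\sigma_1}\bm{X}_0^T\bm{Y}_0\Big\},\quad \bm{\Sigma}_s=\sigma_1^2(\bm{X}_1^T\bm{X}_1+a_0\bm{X}_0^T\bm{X}_0)^{-1},$$ $$\widehat{\bm{\beta}}_p=\bm{\Sigma}_p\Big\{\tfrac{1}{\sigma_1^2}\bm{X}_1^T\bm{Y}_1+\tfrac{a_0}{\sigma_0^2}\bm{X}_0^T\bm{Y}_0\Big\},\quad \bm{\Sigma}_p=\Big\{\tfrac{1}{\sigma_1^2}\bm{X}_1^T\bm{X}_1+\tfrac{a_0}{\sigma_0^2}\bm{X}_0^T\bm{X}_0\Big\}^{-1}.$$ For $j\in\{0,\dots,p-1\}$ let $\beta_{1j}$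 be the $(j+1)$th entry of $\bm{\beta}_1$ and $\hat\beta_{s,1j},\hat\beta_{p,1j}$ the $(j+1)$th entries of $\widehat{\bm{\beta}}_s,\widehat{\bm{\beta}}_p$. Assume $\beta_{1j}\neq 0$ and $\mathrm{Bias}(\hat\beta_{p,1j})\neq 0$. Then $$\frac{\mathrm{Var}(\hat\beta_{s,1j})-\mathrm{Var}(\hat\beta_{p,1j})}{\big[\mathrm{PercentBias}(\hat\beta_{p,1j})\big]^2}\le \beta_{1j}^2$$ implies $\mathrm{MSE}(\hat\beta_{s,1j})\le \mathrm{MSE}(\hat\beta_{p,1j})$.
   Context: All variances, biases and MSEs are frequentist, taken over the sampling distribution of $(\bm{Y}_0,\bm{Y}_1)$ with designs fixed: $\mathrm{Bias}(\hat\beta)=E(\hat\beta)-\beta_{1j}$, $\mathrm{MSE}=\mathrm{Var}+\mathrm{Bias}^2$, and $\mathrm{PercentBias}(\hat\beta_{p,1j})=\mathrm{Bias}(\hat\beta_{p,1j})/\beta_{1j}$. The two estimators are the posterior means of $\bm{\beta}_1$ under a uniform improper initial prior combined with, respectively, the scale transformed power prior $\bm{\beta}_1\sim N\big((\sigma_1/\sigma_0)(\bm{X}_0^T\bm{X}_0)^{-1}\bm{X}_0^T\bm{Y}_0,\ (\sigma_1^2/a_0)(\bm{X}_0^T\bm{X}_0)^{-1}\big)$ and the power prior $\bm{\beta}_1\sim N\big((\bm{X}_0^T\bm{X}_0)^{-1}\bm{X}_0^T\bm{Y}_0,\ (\sigma_0^2/a_0)(\bm{X}_0^T\bm{X}_0)^{-1}\big)$,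 with current-data likelihood $N(\bm{X}_1\bm{\beta}_1,\sigma_1^2\bm{I})$. *)

(* Defs.v *)
From HB Require Import structures.
From mathcomp Require Import all_boot all_order all_algebra.
From mathcomp Require Import all_classical all_reals all_analysis.
Set Implicit Arguments. Unset Strict Implicit. Unset Printing Implicit Defensive.
Import Order.TTheory GRing.Theory Num.Theory.
Local Open Scope classical_set_scope.
Local Open Scope ring_scope.

(* Mutual independence of a finite family of real random variables:
   the joint law of (X i)_i is the product of the marginals on every
   product of Borel sets (probabilities are finite, so we compare them in R). *)
Definition mutually_independent {d} {T : measurableType d} {R : realType}
  (P : probability T R) (I : finType) (X : I -> T -> R) : Prop :=
  forall B : I -> set R, (forall i, measurable (B i)) ->
    fine (P [set w | forall i, B i (X i w)]) =
    \prod_(i : I) fine (P (X i @^-1` B i)).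

Definition colRV {T : Type} {R : realType} (n : nat) (Y : 'I_n -> T -> R) (w : T)
  : 'cV[R]_n := \col_i Y i w.

Definition Sigma_s {R : realType} (p n0 n1 : nat) (X0 : 'M[R]_(n0, p))
  (X1 : 'M[R]_(n1, p)) (s1 a0 : R) : 'M[R]_p :=
  (s1 ^+ 2) *: invmx (X1^T *m X1 + a0 *: (X0^T *m X0)).

Definition beta_s {R : realType} (p n0 n1 : nat) (X0 : 'M[R]_(n0, p))
  (X1 : 'M[R]_(n1, p)) (s0 s1 a0 : R) (y0 : 'cV[R]_n0) (y1 : 'cV[R]_n1)
  : 'cV[R]_p :=
  Sigma_s X0 X1 s1 a0 *m
    ((s1 ^+ 2)^-1 *: (X1^T *m y1) + (a0 / (s0 * s1)) *: (X0^T *m y0)).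

Definition Sigma_p {R : realType} (p n0 n1 : nat) (X0 : 'M[R]_(n0, p))
  (X1 : 'M[R]_(n1, p)) (s0 s1 a0 : R) : 'M[R]_p :=
  invmx ((s1 ^+ 2)^-1 *: (X1^T *m X1) + (a0 / s0 ^+ 2) *: (X0^T *m X0)).

Definition beta_p {R : realType} (p n0 n1 : nat) (X0 : 'M[R]_(n0, p))
  (X1 : 'M[R]_(n1, p)) (s0 s1 a0 : R) (y0 : 'cV[R]_n0) (y1 : 'cV[R]_n1)
  : 'cV[R]_p :=
  Sigma_p X0 X1 s0 s1 a0 *m
    ((s1 ^+ 2)^-1 *: (X1^T *m y1) + (a0 / s0 ^+ 2) *: (X0^T *m y0)).

Definition Bias {d} {T : measurableType d} {R : realType}
  (P : probability T R) (est : T -> R) (b : R) : R :=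
  fine ('E_P[est]) - b.

Definition Var {d} {T : measurableType d} {R : realType}
  (P : probability T R) (est : T -> R) : R :=
  fine ('V_P[est]).

Definition MSE {d} {T : measurableType d} {R : realType}
  (P : probability T R) (est : T -> R) (b : R) : R :=
  Var P est + Bias P est b ^+ 2.

Definition PercentBias {d} {T : measurableType d} {R : realType}
  (P : probability T R) (est : T -> R) (b : R) : R :=
  Bias P est b / b.

(* Main.v *)
Require Import Defs.
From HB Require Import structures.
From mathcomp Require Import all_boot all_order all_algebra.
From mathcomp Require Import all_classical all_reals all_analysis.
From mathcomp Require Import measurable_realfun.
From mathcomp Require Import ring lra.
Import Order.TTheory GRing.Theory Num.Theory.
Import numFieldNormedType.Exports.
Local Open Scope classical_set_scope.
Local Open Scope ring_scope.
Section L.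
Context {R : realType}.
Local Notation mu := (@lebesgue_measure R).
Local Open Scope ereal_scope.

Lemma leb_translate (G : R -> R) (c : R) : continuous G -> (forall x, 0 <= G x)%R ->
  \int[mu]_x (G x)%:E = \int[mu]_x (G (x + c)%R)%:E.
Proof.
move=> cG G0.
have dF : forall x, ((+%R^~ c)^`()%classic : R -> R) x = 1%R.
  by move=> x; rewrite derive1E deriveD// derive_id derive_cst addr0.
rewrite (@increasing_ge0_integration_by_substitutionT _ (+%R^~ c))//.
- by apply: eq_integral => x _; rewrite !fctE derive1E deriveD// derive_id derive_cst addr0 mulr1.
- by move=> x y xy; rewrite ltrD2r.
all: try (set f := (_^`()%classic);
  have -> : f = cst 1%R by apply/funext => x; rewrite /f derive1E deriveD// derive_id derive_cst addr0).
- exact: cst_continuous.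
- exact: is_cvg_cst.
- exact: is_cvg_cst.
- exact: cvg_addrr_Ny.
- exact: cvg_addrr.
Qed.

Lemma leb_half (G : R -> R) : continuous G -> (forall x, 0 <= G x)%R ->
  \int[mu]_x (G x)%:E = \int[mu]_(x in `[0%R, +oo[) (G (- x))%:E
     + \int[mu]_(x in `[0%R, +oo[) (G x)%:E.
Proof.
move=> cG G0.
have mf : measurable_fun [set: R] G by exact: continuous_measurable_fun.
have mposnums : measurable [set x : R | 0 <= x]%R by rewrite -set_itvcy.
rewrite -(setUv [set x : R | 0 <= x]%R) ge0_integral_setU//= ; last 4 first.
  exact: measurableC.
  by apply/measurable_EFinP; rewrite setUv.
  by move=> x _; rewrite lee_fin.
  exact/disj_setPCl.
rewrite addeC; congr +%E; last by rewrite -set_itvcy.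
rewrite -set_itvcy// setCitvr.
rewrite integral_itv_bndo_bndc; last exact/measurable_EFinP/measurable_funTS.
rewrite -{1}oppr0 ge0_integration_by_substitutionNy//.
exact: continuous_subspaceT.
Qed.

Lemma leb_reflect (G : R -> R) : continuous G -> (forall x, 0 <= G x)%R ->
  \int[mu]_x (G x)%:E = \int[mu]_x (G (- x))%:E.
Proof.
move=> cG G0.
have cG' : continuous (fun x => G (- x)%R).
  move=> x; apply: continuous_comp; last exact: cG.
  exact: oppr_continuous.
rewrite (@leb_half G cG)// (@leb_half (fun x => G (- x)%R) cG')// addeC.
by under [X in _ = X + _]eq_integral do rewrite opprK.
Qed.
Lemma normal_ge0_integral (m s : R) (f : R -> \bar R) :
  (forall x, 0 <= f x) -> measurable_fun setT f ->
  \int[normal_prob m s]_x f x = \int[mu]_x (f x * (normal_pdf m s x)%:E).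
Proof.
move=> f0 mf.
have dom := normal_prob_dominates m s.
rewrite -(Radon_Nikodym_SigmaFinite.change_of_variables dom f0 measurableT mf).
have mRN : measurable_fun setT (Radon_Nikodym_SigmaFinite.f (normal_prob m s) mu).
  exact: (measurable_int mu (Radon_Nikodym_SigmaFinite.f_integrable dom)).
have mpdf : measurable_fun setT (fun x => (normal_pdf m s x)%:E).
  by apply/measurable_EFinP; exact: measurable_normal_pdf.
apply: ae_eq_integral => //.
- exact: emeasurable_funM.
- exact: emeasurable_funM.
have : ae_eq mu setT (Radon_Nikodym_SigmaFinite.f (normal_prob m s) mu)
   (fun x => (normal_pdf m s x)%:E).
  apply: integral_ae_eq => //.
  - exact: Radon_Nikodym_SigmaFinite.f_integrable.
  - move=> E _ mE; rewrite -Radon_Nikodym_SigmaFinite.f_integral//.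
by apply: filterS => x /= /[apply] ->.
Qed.
End L.

Section N.
Context {R : realType}.
Local Notation mu := (@lebesgue_measure R).
Variables (m s : R).
Hypothesis hs : 0 < s.

Let s' := Num.sqrt 2 * s.
Let hs' : 0 < s'. Proof. by rewrite mulr_gt0// sqrtr_gt0. Qed.
Let s's : s' ^+ 2 = 2 * s ^+ 2.
Proof. by rewrite /s' exprMn sqr_sqrtr. Qed.

Lemma pdf_sym x : normal_pdf m s (m + m - x) = normal_pdf m s x.
Proof.
rewrite /normal_pdf gt_eqF//; congr (_ * _); rewrite /normal_fun; congr expR.
by congr (- _ / _); rewrite -sqrrN; congr (_ ^+ 2); ring.
Qed.

Lemma gp_bound x : Num.max (x - m) 0 * normal_pdf m s x <=
  (s * normal_peak s / normal_peak s') * normal_pdf m s' x.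
Proof.
rewrite /normal_pdf !gt_eqF//.
have p0 : 0 < normal_peak s by rewrite normal_peak_gt0// gt_eqF.
have p0' : 0 < normal_peak s' by rewrite normal_peak_gt0// gt_eqF.
have -> : s * normal_peak s / normal_peak s' * (normal_peak s' * normal_fun m s' x)
   = s * normal_peak s * normal_fun m s' x.
  by field; rewrite gt_eqF.
rewrite /normal_fun s's.
set u := (x - m) ^+ 2 / ((2 * s ^+ 2) *+ 2).
have -> : - (x - m) ^+ 2 / (s ^+ 2 *+ 2) = - u + - u.
  by rewrite /u -mulNr; field; rewrite gt_eqF.
rewrite mulNr -/u expRD.
have eu : 0 < expR u by exact: expR_gt0.
have u0 : u * (s ^+ 2 *+ 4) = (x - m) ^+ 2.
  by rewrite /u; field; rewrite gt_eqF.
have u00 : 0 <= u by rewrite /u divr_ge0// ?sqr_ge0// mulrn_wge0// mulr_ge0// sqr_ge0.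
have key0 : Num.max (x - m) 0 <= s * (1 + u).
  rewrite ge_max; apply/andP; split; last by rewrite mulr_ge0// ?addr_ge0// ltW.
  have e : 4 * s * (s * (1 + u) - (x - m)) = (2 * s - (x - m)) ^+ 2.
    have -> : 4 * s * (s * (1 + u) - (x - m)) = 4 * s ^+ 2 + u * (s ^+ 2 *+ 4) - 4 * s * (x - m) by ring.
    by rewrite u0; ring.
  have : 0 <= 4 * s * (s * (1 + u) - (x - m)) by rewrite e sqr_ge0.
  rewrite pmulr_rge0 ?subr_ge0// mulr_gt0//.
have key : Num.max (x - m) 0 <= s * expR u.
  by apply: (le_trans key0); apply: ler_wpM2l; [exact: ltW|exact: expR_ge1Dx].
have key2 : Num.max (x - m) 0 * expR (- u) <= s.
  by rewrite expRN -(ler_pM2r eu) mulfVK ?gt_eqF.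
rewrite (_ : _ * (_ * (_ * _)) = (normal_peak s * expR (-u)) * (Num.max (x-m) 0 * expR(-u))); last by ring.
rewrite [leRHS](_ : _ = (normal_peak s * expR (-u)) * s); last by ring.
by apply: ler_wpM2l => //; rewrite mulr_ge0// ?expR_ge0// ltW.
Qed.

Lemma gp_cont : continuous (fun x => Num.max (x - m) 0 * normal_pdf m s x).
Proof.
move=> y.
have h1 : {for y, continuous ((fun x : R => (x - m) : R^o) \max (fun=> 0 : R^o))}.
  apply: continuous_max; last exact: cst_continuous.
  by apply: continuousB => //; exact: cst_continuous.
have := continuousM h1 (@continuous_normal_pdf R m s (lt0r_neq0 hs) y).
move=> H; exact: H.
Qed.

Lemma gm_cont : continuous (fun x => Num.max (m - x) 0 * normal_pdf m s x).
Proof.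
move=> y.
have h1 : {for y, continuous ((fun x : R => (m - x) : R^o) \max (fun=> 0 : R^o))}.
  apply: continuous_max; last exact: cst_continuous.
  by apply: continuousB => //; exact: cst_continuous.
exact: (@continuousM R R _ (normal_pdf m s) y h1 (@continuous_normal_pdf R m s (lt0r_neq0 hs) y)).
Qed.

Definition gp x := Num.max (x - m) 0 * normal_pdf m s x.
Definition gm x := Num.max (m - x) 0 * normal_pdf m s x.
Lemma gp0 x : 0 <= gp x. Proof. by rewrite mulr_ge0 ?le_max ?lexx ?orbT// normal_pdf_ge0. Qed.
Lemma gm0 x : 0 <= gm x. Proof. by rewrite mulr_ge0 ?le_max ?lexx ?orbT// normal_pdf_ge0. Qed.

Lemma gp_gm : (\int[mu]_x (gm x)%:E = \int[mu]_x (gp x)%:E)%E.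
Proof.
rewrite (@leb_reflect _ gm gm_cont gm0).
have cG : continuous (fun x => gm (- x)).
  move=> x; apply: continuous_comp; last exact: gm_cont.
  exact: oppr_continuous.
rewrite (@leb_translate _ (fun x => gm (- x)) (- (m + m)) cG (fun x => gm0 _)).
apply: eq_integral => x _; rewrite /gm /gp.
have -> : - (x + - (m + m)) = m + m - x by ring.
by rewrite pdf_sym; congr (Num.max _ _ * _ )%:E; ring.
Qed.

Lemma gp_fin : (\int[mu]_x (gp x)%:E < +oo)%E.
Proof.
have mgp : measurable_fun setT gp by exact: continuous_measurable_fun gp_cont.
set c := s * normal_peak s / normal_peak s'.
have c0 : 0 <= c by rewrite /c divr_ge0 ?mulr_ge0 ?normal_peak_ge0// ltW.
apply: (@le_lt_trans _ _ (\int[mu]_x (c%:E * (normal_pdf m s' x)%:E))%E).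
  apply: ge0_le_integral => //.
  - by move=> x _; rewrite lee_fin gp0.
  - exact/measurable_EFinP.
  - apply: emeasurable_funM => //; apply/measurable_EFinP; exact: measurable_normal_pdf.
  - by move=> x _; rewrite -EFinM lee_fin gp_bound.
rewrite ge0_integralZl//.
- by rewrite integral_normal_pdf mule1 ltry.
- by apply/measurable_EFinP; exact: measurable_normal_pdf.
- by move=> x _; rewrite lee_fin normal_pdf_ge0.
Qed.
End N.

Section RV.
Context {R : realType} d (T : measurableType d) (P : probability T R) (X : {RV P >-> R}).
Local Notation mu := (@lebesgue_measure R).
Variables (m s : R).
Hypothesis hs : 0 < s.
Hypothesis hX : distribution P X = normal_prob m s :> (set R -> \bar R).
Let X' : T -> measurableTypeR R := X.
Let mX' : measurable_fun setT X'.
Proof. exact: (measurable_funP X). Qed.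
HB.instance Definition _ := isMeasurableFun.Build _ _ _ _ X' mX'.
Let hX' : distribution P (X' : {RV P >-> measurableTypeR R}) = normal_prob m s.
Proof. exact: hX. Qed.

Local Open Scope ereal_scope.

Lemma tr (f : measurableTypeR R -> \bar R) : (forall x, 0 <= f x) -> measurable_fun setT f ->
  \int[P]_w f (X w) = \int[mu]_x (f x * (normal_pdf m s x)%:E).
Proof.
move=> f0 mf.
have := @ge0_integral_distribution _ _ _ _ R P X' f mf f0.
rewrite hX' => H.
transitivity (\int[normal_prob m s]_x f x); last exact: normal_ge0_integral.
by rewrite H.
Qed.


Let mXT : measurable_fun setT (X : T -> R). Proof. exact: (measurable_funP X). Qed.

Let mh (c : R) (sg : bool) : measurable_fun setT
   (fun x : measurableTypeR R => (Num.max ((if sg then x - c else c - x)) 0)%R).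
Proof.
apply: measurable_maxr => //; case: sg.
- by apply: measurable_funB => //.
- by apply: measurable_funB => //.
Qed.

Let trg (sg : bool) : \int[P]_w (Num.max (if sg then X w - m else m - X w) 0)%:E =
  \int[mu]_x ((if sg then gp m s x else gm m s x)%:E).
Proof.
rewrite (@tr (fun x => (Num.max (if sg then x - m else m - x) 0)%:E)).
- by apply: eq_integral => x _; case: sg; rewrite -EFinM.
- by move=> x; rewrite lee_fin le_max lexx orbT.
- by apply/measurable_EFinP; exact: mh.
Qed.

Let intg (sg : bool) : P.-integrable setT
   (EFin \o (fun w => Num.max (if sg then X w - m else m - X w) 0)%R).
Proof.
apply/integrableP; split.
  apply/measurable_EFinP; apply: measurable_maxr => //.
  by case: sg; apply: measurable_funB.
rewrite (_ : (fun x => _) = (fun w => (Num.max (if sg then X w - m else m - X w) 0)%R%:E)); last first.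
  by apply/funext => w /=; rewrite ger0_norm// le_max lexx orbT.
rewrite trg; case: sg; first exact: gp_fin.
by rewrite gp_gm//; exact: gp_fin.
Qed.

Let fpm (sg : bool) := (fun w => Num.max (if sg then X w - m else m - X w) 0)%R.

Let Xdec : (EFin \o (X : T -> R)) =
  ((EFin \o fpm true) \- (EFin \o fpm false)) \+ (EFin \o cst m).
Proof.
apply/funext => w /=; rewrite -EFinB -EFinD; congr EFin.
rewrite /fpm /= -[(m - X w)%R]opprB.
have [h|h] := leP (X w - m)%R 0%R.
  by rewrite max_l ?oppr_ge0//; ring.
by rewrite max_r ?oppr_le0 ?(ltW h)//; ring.
Qed.

Lemma normal_Lfun : (X : T -> R) \in Lfun P 1.
Proof.
apply/Lfun1_integrable; rewrite Xdec.
apply: integrableD => //; last exact: finite_measure_integrable_cst.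
by apply: integrableB => //; [exact: (intg true)|exact: (intg false)].
Qed.

Lemma normal_E : 'E_P[X] = m%:E.
Proof.
rewrite expectation_def.
transitivity (\int[P]_w ((EFin \o (X : T -> R)) w)); first by [].
rewrite Xdec integralD//; last 2 first.
- by apply: integrableB => //; [exact: (intg true)|exact: (intg false)].
- exact: finite_measure_integrable_cst.
rewrite integralB//; [|exact: (intg true)|exact: (intg false)].
have h1 := trg true; have h2 := trg false.
rewrite /= in h1 h2.
rewrite /fpm /comp h1 h2 gp_gm//.
have -> : \int[P]_x (cst m x)%:E = m%:E.
  transitivity (\int[P]_x (cst m%:E x)); first by [].
  by rewrite integral_cst// -[RHS]mule1; congr (_ * _); exact: probability_setT.
have hf : \int[mu]_x (gp m s x)%:E \is a fin_num.
  rewrite ge0_fin_numE ?gp_fin//.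
  by apply: integral_ge0 => x _; rewrite lee_fin gp0.
by rewrite subee// add0e.
Qed.
End RV.

Section Esum.
Context {R : realType} d (T : measurableType d) (P : probability T R).

Lemma Esum n (c : 'I_n -> R) (Y : 'I_n -> T -> R) (mu : 'I_n -> R) :
  (forall i, Y i \in Lfun P 1) -> (forall i, ('E_P[Y i] = (mu i)%:E)%E) ->
  (fun w => \sum_i c i * Y i w) \in Lfun P 1 /\
  ('E_P[(fun w => \sum_i c i * Y i w)%R] = (\sum_i c i * mu i)%R%:E)%E.
Proof.
elim: n c Y mu => [|n IH] c Y mu hL hE.
  have -> : (fun w => \sum_(i < 0) c i * Y i w) = cst 0.
    by apply/funext => w; rewrite big_ord0.
  by rewrite big_ord0; split; [exact: Lfun_cst|exact: expectation_cst].
have [IL IE] := IH (fun i => c (widen_ord (leqnSn n) i)) (fun i => Y (widen_ord (leqnSn n) i))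
   (fun i => mu (widen_ord (leqnSn n) i)) (fun i => hL _) (fun i => hE _).
have -> : (fun w => \sum_(i < n.+1) c i * Y i w) =
   (fun w => \sum_(i < n) c (widen_ord (leqnSn n) i) * Y (widen_ord (leqnSn n) i) w)
   \+ (c ord_max \o* Y ord_max).
  apply/funext => w; rewrite big_ord_recr. by rewrite /= mulrC.
have L2 : (c ord_max \o* Y ord_max) \in Lfun P 1 by apply: Lfun_scale => //; exact: hL.
split; first exact: rpredD.
rewrite expectationD// IE expectationZl ?hE// big_ord_recr /= EFinD EFinM.
by [].
Qed.
End Esum.

Section U.
Variable R : realFieldType.

Lemma rowsq (k : nat) (r : 'rV[R]_k) : (r *m r^T) 0 0 = \sum_i r 0 i ^+ 2.
Proof. by rewrite !mxE; apply: eq_bigr => i _; rewrite !mxE expr2. Qed.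

Lemma rowsq_ge0 (k : nat) (r : 'rV[R]_k) : 0 <= (r *m r^T) 0 0.
Proof. by rewrite rowsq sumr_ge0// => i _; rewrite sqr_ge0. Qed.

Lemma rowsq_eq0 (k : nat) (r : 'rV[R]_k) : (r *m r^T) 0 0 = 0 -> r = 0.
Proof.
rewrite rowsq => h; apply/matrixP => i j; rewrite mxE (ord1 i).
have := @psumr_eq0P _ _ predT (fun i => r 0 i ^+ 2) (fun i _ => sqr_ge0 (r 0 i)) h j isT.
by move/eqP; rewrite sqrf_eq0 => /eqP.
Qed.

Lemma unitA (p n0 n1 : nat) (X0 : 'M[R]_(n0, p)) (X1 : 'M[R]_(n1, p)) (a0 : R) :
  \rank X1 = p -> 0 < a0 -> (X1^T *m X1 + a0 *: (X0^T *m X0)) \in unitmx.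
Proof.
move=> hr ha.
set A := X1^T *m X1 + a0 *: (X0^T *m X0).
rewrite -row_free_unit -kermx_eq0; apply/eqP/row_matrixP => i; rewrite row0.
set u := row i (kermx A).
have uA : u *m A = 0 by apply/sub_kermxP; exact: row_sub.
have e : (u *m A) *m u^T = (u *m X1^T) *m (u *m X1^T)^T + a0 *: ((u *m X0^T) *m (u *m X0^T)^T).
  rewrite /A mulmxDr mulmxDl -scalemxAr scalemxAl !trmx_mul !trmxK !mulmxA.
  by rewrite -!scalemxAl.
have e0 := congr1 (fun M : 'M[R]_(1,1) => M 0 0) e; rewrite /= uA mul0mx mxE [in X in _ = X]mxE in e0.
have h1 := @rowsq_ge0 _ (u *m X1^T); have h0 := @rowsq_ge0 _ (u *m X0^T); rewrite [X in _ + X]mxE in e0.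
have z : ((u *m X1^T) *m (u *m X1^T)^T) 0 0 = 0 by nra.
have v1 := @rowsq_eq0 _ _ z.
apply: (@row_free_inj _ _ _ _ X1^T); first by rewrite /row_free mxrank_tr hr.
by rewrite v1 mul0mx.
Qed.
End U.

Lemma matfact (R : fieldType) p n0 n1 (X0 : 'M[R]_(n0,p)) (X1 : 'M[R]_(n1,p)) (s0 s1 a0 : R) (b : 'cV[R]_p) :
  s0 != 0 -> s1 != 0 -> (X1^T *m X1 + a0 *: (X0^T *m X0)) \in unitmx ->
  ((s1 ^+ 2) *: invmx (X1^T *m X1 + a0 *: (X0^T *m X0))) *m ((s1 ^+ 2)^-1 *: X1^T) *m (X1 *m b)
  + ((s1 ^+ 2) *: invmx (X1^T *m X1 + a0 *: (X0^T *m X0))) *m ((a0 / (s0 * s1)) *: X0^T) *m (X0 *m ((s0 / s1) *: b)) = b.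
Proof.
move=> h0 h1 U.
set A := X1^T *m X1 + a0 *: (X0^T *m X0) in U *.
rewrite -!scalemxAl -?scalemxAr -?scalemxAl -?scalemxAr !scalerA.
rewrite (_ : s1 ^+ 2 * s1 ^- 2 = 1); last by field.
rewrite (_ : s1 ^+ 2 * (s0 / s1 * (a0 / (s0 * s1))) = a0); last by field; rewrite h0 h1.
rewrite scale1r.
rewrite -[RHS]mul1mx -(mulVmx U) /A mulmxDr mulmxDl -scalemxAr -scalemxAl !mulmxA.
by [].
Qed.

Theorem theorem1 (R : realType) (d : measure_display) (T : measurableType d)
  (P : probability T R) (p n0 n1 : nat)
  (X0 : 'M[R]_(n0, p)) (X1 : 'M[R]_(n1, p)) (sigma0 sigma1 a0 : R)
  (beta0 beta1 : 'cV[R]_p)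
  (Y0 : 'I_n0 -> {RV P >-> R}) (Y1 : 'I_n1 -> {RV P >-> R}) (j : 'I_p) :
  (1 <= p)%N -> (1 <= n0)%N -> (1 <= n1)%N ->
  \rank X0 = p -> \rank X1 = p ->
  0 < sigma0 -> 0 < sigma1 -> 0 < a0 -> a0 <= 1 ->
  (* Y0 ~ N_{n0}(X0 beta0, sigma0^2 I), Y1 ~ N_{n1}(X1 beta1, sigma1^2 I),
     independently: all coordinates are mutually independent normals *)
  (forall i, distribution P (Y0 i) = normal_prob ((X0 *m beta0) i 0) sigma0
     :> (set R -> \bar R)) ->
  (forall i, distribution P (Y1 i) = normal_prob ((X1 *m beta1) i 0) sigma1
     :> (set R -> \bar R)) ->
  mutually_independent P
    (fun k : 'I_n0 + 'I_n1 =>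
       match k with inl i => (Y0 i : T -> R) | inr i => (Y1 i : T -> R) end) ->
  beta0 = (sigma0 / sigma1) *: beta1 ->
  let bs := fun w => beta_s X0 X1 sigma0 sigma1 a0
                       (colRV (fun i => (Y0 i : T -> R)) w)
                       (colRV (fun i => (Y1 i : T -> R)) w) j 0 in
  let bp := fun w => beta_p X0 X1 sigma0 sigma1 a0
                       (colRV (fun i => (Y0 i : T -> R)) w)
                       (colRV (fun i => (Y1 i : T -> R)) w) j 0 in
  let b1j := beta1 j 0 in
  b1j != 0 -> Bias P bp b1j != 0 ->
  (Var P bs - Var P bp) / (PercentBias P bp b1j) ^+ 2 <= b1j ^+ 2 ->
  MSE P bs b1j <= MSE P bp b1j.
Proof.
move=> hp hn0 hn1 hr0 hr1 hs0 hs1 ha0 ha1 hY0 hY1 hind hb bs bp b1j hb1 hBp H.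
set S := Sigma_s X0 X1 sigma1 a0.
set M0 := S *m ((a0 / (sigma0 * sigma1)) *: X0^T).
set M1 := S *m ((sigma1 ^+ 2)^-1 *: X1^T).
have bsE : bs = (fun w => \sum_k M1 j k * Y1 k w) \+ (fun w => \sum_i M0 j i * Y0 i w).
  apply/funext => w; rewrite /bs /beta_s -/S /=.
  have key : forall (Sm : 'M[R]_p) (c1 c0 : R) (y1 : 'cV[R]_n1) (y0 : 'cV[R]_n0),
     Sm *m (c1 *: (X1^T *m y1) + c0 *: (X0^T *m y0)) =
     (Sm *m (c1 *: X1^T)) *m y1 + (Sm *m (c0 *: X0^T)) *m y0.
    by move=> Sm c1 c0 y1 y0; rewrite mulmxDr -!mulmxA !scalemxAl.
  rewrite key -/M0 -/M1 mxE !mxE.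
  by congr (_ + _); apply: eq_bigr => k _; rewrite /colRV; congr (_ * _); rewrite mxE.
have L0 i : (Y0 i : T -> R) \in Lfun P 1 := @normal_Lfun _ _ _ P (Y0 i) _ _ hs0 (hY0 i).
have L1 i : (Y1 i : T -> R) \in Lfun P 1 := @normal_Lfun _ _ _ P (Y1 i) _ _ hs1 (hY1 i).
have E0 i := @normal_E _ _ _ P (Y0 i) _ _ hs0 (hY0 i).
have E1 i := @normal_E _ _ _ P (Y1 i) _ _ hs1 (hY1 i).
have [LS0 ES0] := @Esum _ _ _ P _ (M0 j) _ _ L0 E0.
have [LS1 ES1] := @Esum _ _ _ P _ (M1 j) _ _ L1 E1.
have Ebs : ('E_P[bs] = (\sum_k M1 j k * (X1 *m beta1) k 0 + \sum_i M0 j i * (X0 *m beta0) i 0)%:E)%E.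
  by rewrite bsE expectationD// ES0 ES1 EFinD.
have Eval : \sum_k M1 j k * (X1 *m beta1) k 0 + \sum_i M0 j i * (X0 *m beta0) i 0 = b1j.
  transitivity ((M1 *m (X1 *m beta1) + M0 *m (X0 *m beta0)) j 0); first by rewrite !mxE.
  suff -> : M1 *m (X1 *m beta1) + M0 *m (X0 *m beta0) = beta1 by [].
  have U := @unitA _ _ _ _ X0 X1 _ hr1 ha0.
  rewrite /M1 /M0 /S /Sigma_s hb.
  exact: matfact (lt0r_neq0 hs0) (lt0r_neq0 hs1) U.
have hB : Bias P bs b1j = 0 by rewrite /Bias Ebs Eval /= subrr.
rewrite /MSE hB expr0n /= addr0.
rewrite /PercentBias in H.
set B := Bias P bp b1j in H hBp *.
have hq : 0 < (B / b1j) ^+ 2.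
  by rewrite exprn_even_gt0 //= mulf_neq0 // invr_eq0.
rewrite ler_pdivrMr // in H.
have e : b1j ^+ 2 * (B / b1j) ^+ 2 = B ^+ 2 by field.
rewrite e in H.
lra.
Qed.
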